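(* Let $\beta>0$, $\kappa>0$, $\gamma=\beta/(\nu+2)$, $\nu\in(-1,1)$, and fix $\eta_{0,\infty}>0$ with $\frac{\beta(\nu+1)}{2(\nu+2)}<\eta_{0,\infty}^{\nu+3}<\beta$. For $s>0$ let $\eta_\infty(s)=s^{-2/(\nu+3)}\eta_{0,\infty}$ and let $(w_s,\eta_s)$ be the soliton-like traveling wave with speed $s$ and background $\eta_\infty(s)$, normalized so that $w_s(z)=s^{\frac{\nu+1}{\nu+3}}w_0(z)$, $\eta_s(z)=s^{-\frac{2}{\nu+3}}\eta_0(z)$, where $(w_0,\eta_0)$ is the soliton-like solution of $w_0-\eta_0^{-(\nu+2)}+\eta_{0,\infty}^{-(\nu+2)}=0$, $(\gamma-\kappa\partial_z^2)w_0+\eta_0-\eta_{0,\infty}=0$ with $w_0\to0$, $\eta_0\to\eta_{0,\infty}$ at $\pm\infty$. Then the momentum $I(s)=\int_{-\infty}^{\infty}w_s(z)\,[\eta_s(z)-\eta_\infty(s)]\,dz$ satisfies $$\frac{dI}{ds}=s^{-4/(\nu+3)}\,\frac{\nu-1}{\nu+3}\int_{-\infty}^{\infty}w_0(z)[\eta_0(z)-\eta_{0,\infty}]\,dz>0.$$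
   Context: A soliton-like traveling wave with speed $s$ and background $\eta_\infty>0$ is a non-constant smooth pair $(w_s,\eta_s)$ with $\eta_s>0$ satisfying $s w_s+\eta_\infty^{-(\nu+2)}-\eta_s^{-(\nu+2)}=0$, $(\gamma-\kappa\partial_z^2)w_s+s(\eta_s-\eta_\infty)=0$, $w_s\to0$, $\eta_s\to\eta_\infty$ as $|z|\to\infty$, with $\eta_s>\eta_\infty$ (homoclinic loop to the right of the saddle $(\eta_\infty,0)$ of the phase plane $(\eta_s,\eta_s')$). *)

(* Defs.v *)
From Stdlib Require Import Reals Lra.
Open Scope R_scope.

Definition smooth (f : R -> R) : Prop :=
  exists D : nat -> R -> R,
    D O = f /\ forall (n : nat) (x : R), derivable_pt_lim (D n) x (D (S n) x).

Definition tends_at_infty (f : R -> R) (l : R) : Prop :=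
  forall eps, 0 < eps -> exists M, forall z, M < Rabs z -> Rabs (f z - l) < eps.

Definition improper_integral_R (f : R -> R) (l : R) : Prop :=
  (forall a b, a <= b -> inhabited (Riemann_integrable f a b)) /\
  forall eps, 0 < eps -> exists M, forall a b, a <= - M -> M <= b ->
    exists pr : Riemann_integrable f a b, Rabs (RiemannInt pr - l) < eps.

(* (w0, eta0) is a soliton-like solution of the rescaled (s = 1) system
     w0 - eta0^{-(nu+2)} + eta0inf^{-(nu+2)} = 0,
     (gamma - kappa d^2/dz^2) w0 + eta0 - eta0inf = 0,
   with w0 -> 0, eta0 -> eta0inf at +-infinity, eta0 > 0, non-constant,
   and eta0 > eta0inf (homoclinic loop to the right of the saddle). *)
Definition soliton_like (nu gamma kappa eta0inf : R) (w0 eta0 : R -> R) : Prop :=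
  smooth w0 /\ smooth eta0 /\
  (forall z, 0 < eta0 z) /\
  (exists z1 z2, (w0 z1, eta0 z1) <> (w0 z2, eta0 z2)) /\
  (forall z, w0 z - Rpower (eta0 z) (-(nu + 2)) + Rpower eta0inf (-(nu + 2)) = 0) /\
  (exists w0' w0'' : R -> R,
     (forall z, derivable_pt_lim w0 z (w0' z)) /\
     (forall z, derivable_pt_lim w0' z (w0'' z)) /\
     (forall z, gamma * w0 z - kappa * w0'' z + (eta0 z - eta0inf) = 0)) /\
  tends_at_infty w0 0 /\ tends_at_infty eta0 eta0inf /\
  (forall z, eta0inf < eta0 z).

(* Main.v *)
Require Import Defs.
From Stdlib Require Import Reals Lra Classical FunctionalExtensionality.
From Coquelicot Require Import Coquelicot.
Open Scope R_scope.

Lemma cont_of (g : R -> R) x : continuity_pt g x -> continuous g x.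
Proof. intro H. apply continuity_pt_filterlim. exact H. Qed.

Lemma exR (g : R -> R) a b : (forall x, continuity_pt g x) -> ex_RInt g a b.
Proof. intros H. apply (@ex_RInt_continuous R_CompleteNormedModule). intros; apply cont_of; auto. Qed.

Lemma impr_of_RInt (g : R -> R) l : (forall x, continuity_pt g x) ->
  (forall eps, 0 < eps -> exists M, forall a b, a <= -M -> M <= b -> Rabs (RInt g a b - l) < eps) ->
  improper_integral_R g l.
Proof.
  intros Hc H. split.
  - intros a b Hab. constructor. apply continuity_implies_RiemannInt; auto.
  - intros eps Heps. destruct (H eps Heps) as [M HM]. exists (Rmax M 0).
    intros a b Ha Hb.
    assert (Hab : a <= b). { pose proof (Rmax_r M 0). lra. }
    exists (continuity_implies_RiemannInt Hab (fun x _ => Hc x)).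
    rewrite <- RInt_Reals. apply HM; pose proof (Rmax_l M 0); lra.
Qed.

Lemma RInt_of_impr (g : R -> R) l : improper_integral_R g l ->
  forall eps, 0 < eps -> exists M, forall a b, a <= -M -> M <= b -> Rabs (RInt g a b - l) < eps.
Proof.
  intros [_ H] eps Heps. destruct (H eps Heps) as [M HM]. exists M.
  intros a b Ha Hb. destruct (HM a b Ha Hb) as [pr Hpr]. rewrite RInt_Reals with (pr := pr). exact Hpr.
Qed.

Lemma lim_unique (g : R -> R) l1 l2 :
  (forall eps, 0 < eps -> exists M, forall a b, a <= -M -> M <= b -> Rabs (RInt g a b - l1) < eps) ->
  (forall eps, 0 < eps -> exists M, forall a b, a <= -M -> M <= b -> Rabs (RInt g a b - l2) < eps) ->
  l1 = l2.
Proof.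
  intros H1 H2. destruct (Req_dec l1 l2) as [|Hne]; auto.
  set (e := Rabs (l1 - l2) / 2).
  assert (He : 0 < e). { unfold e. pose proof (Rabs_pos_lt (l1 - l2)). assert (Hz : l1 - l2 <> 0) by lra. specialize (H Hz). lra. }
  destruct (H1 e He) as [M1 HM1]. destruct (H2 e He) as [M2 HM2].
  set (M := Rmax M1 M2).
  specialize (HM1 (-M) M). specialize (HM2 (-M) M).
  assert (-M <= - M1) by (pose proof (Rmax_l M1 M2); unfold M; lra).
  assert (-M <= - M2) by (pose proof (Rmax_r M1 M2); unfold M; lra).
  assert (M1 <= M) by (pose proof (Rmax_l M1 M2); unfold M; lra).
  assert (M2 <= M) by (pose proof (Rmax_r M1 M2); unfold M; lra).
  specialize (HM1 ltac:(lra) ltac:(lra)). specialize (HM2 ltac:(lra) ltac:(lra)).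
  assert (Rabs (l1 - l2) <= Rabs (RInt g (-M) M - l1) + Rabs (RInt g (-M) M - l2)).
  { replace (l1 - l2) with (-(RInt g (-M) M - l1) + (RInt g (-M) M - l2)) by ring.
    eapply Rle_trans; [apply Rabs_triang|]. rewrite Rabs_Ropp. lra. }
  unfold e in *. lra.
Qed.

Lemma lim_scal (g : R -> R) k l : (forall x, continuity_pt g x) ->
  (forall eps, 0 < eps -> exists M, forall a b, a <= -M -> M <= b -> Rabs (RInt g a b - l) < eps) ->
  (forall eps, 0 < eps -> exists M, forall a b, a <= -M -> M <= b -> Rabs (RInt (fun z => k * g z) a b - k * l) < eps).
Proof.
  intros Hc H eps Heps.
  destruct (H (eps / (Rabs k + 1))) as [M HM].
  { apply Rdiv_lt_0_compat; auto. pose proof (Rabs_pos k); lra. }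
  exists M. intros a b Ha Hb.
  assert (E : RInt (fun z => k * g z) a b = k * RInt g a b).
  { exact (RInt_scal g a b k (exR g a b Hc)). }
  rewrite E. replace (k * RInt g a b - k * l) with (k * (RInt g a b - l)) by ring.
  rewrite Rabs_mult. specialize (HM a b Ha Hb).
  pose proof (Rabs_pos k). pose proof (Rabs_pos (RInt g a b - l)).
  apply Rle_lt_trans with ((Rabs k + 1) * Rabs (RInt g a b - l)). nra.
  apply Rlt_le_trans with ((Rabs k + 1) * (eps / (Rabs k + 1))).
  apply Rmult_lt_compat_l; lra. right; field; lra.
Qed.

Lemma RInt_mono (g : R -> R) a a0 b0 b : (forall x, continuity_pt g x) -> (forall x, g x <= 0) ->
  a <= a0 -> a0 <= b0 -> b0 <= b -> RInt g a b <= RInt g a0 b0.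
Proof.
  intros Hc Hn H1 H2 H3.
  rewrite <- (RInt_Chasles g a a0 b) by apply exR, Hc.
  rewrite <- (RInt_Chasles g a0 b0 b) by apply exR, Hc.
  assert (RInt g a a0 <= 0).
  { eapply Rle_trans. apply (RInt_le g (fun _ => 0)); [lra | apply exR, Hc | apply ex_RInt_const | intros; apply Hn].
    rewrite RInt_const. unfold scal; simpl; unfold mult; simpl. lra. }
  assert (RInt g b0 b <= 0).
  { eapply Rle_trans. apply (RInt_le g (fun _ => 0)); [lra | apply exR, Hc | apply ex_RInt_const | intros; apply Hn].
    rewrite RInt_const. unfold scal; simpl; unfold mult; simpl. lra. }
  unfold plus; simpl. lra.
Qed.

Lemma deriv_nonneg_tail (u u1 u2 : R -> R) M :
  (forall z, derivable_pt_lim u z (u1 z)) -> (forall z, derivable_pt_lim u1 z (u2 z)) ->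
  (forall z, M < z -> u2 z < 0) -> (exists M1, forall z, M1 < z -> -1 < u z) ->
  forall b, M < b -> 0 <= u1 b.
Proof.
  intros Hd1 Hd2 Hn [M1 HM1] b Hb.
  destruct (Rle_or_lt 0 (u1 b)) as [|Hneg]; auto. exfalso.
  set (K := (2 + Rabs (u b)) / (- u1 b)).
  assert (HK : 0 < K). { unfold K. apply Rdiv_lt_0_compat. pose proof (Rabs_pos (u b)); lra. lra. }
  set (t := Rmax (b + K) (Rmax M1 b + 1)).
  assert (Ht1 : b + K <= t) by apply Rmax_l.
  assert (Ht2 : Rmax M1 b + 1 <= t) by apply Rmax_r.
  pose proof (Rmax_l M1 b). pose proof (Rmax_r M1 b).
  destruct (MVT_cor2 u u1 b t ltac:(lra) (fun c _ => Hd1 c)) as [c [Hc Hbc]].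
  assert (Hu1c : u1 c <= u1 b).
  { destruct (MVT_cor2 u1 u2 b c ltac:(lra) (fun c _ => Hd2 c)) as [d [Hd Hbd]].
    assert (u2 d < 0) by (apply Hn; lra). nra. }
  assert (u1 c * (t - b) <= u1 b * K) by nra.
  assert (u1 b * K = - (2 + Rabs (u b))) by (unfold K; field; lra).
  assert (u b <= Rabs (u b)) by apply Rle_abs.
  specialize (HM1 t ltac:(lra)). lra.
Qed.

Lemma rpow_pos x y : 0 < Rpower x y.
Proof. unfold Rpower. apply exp_pos. Qed.

Lemma refl_deriv (u u1 : R -> R) : (forall z, derivable_pt_lim u z (u1 z)) ->
  forall z, derivable_pt_lim (fun x => u (- x)) z (- u1 (- z)).
Proof.
  intros H z. apply is_derive_Reals.
  replace (- u1 (- z)) with (scal (-1) (u1 (-z))) by (unfold scal; simpl; unfold mult; simpl; ring).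
  apply (is_derive_comp u Ropp z). apply is_derive_Reals, H.
  apply is_derive_Reals. replace (-1) with (-(1)) by ring. apply derivable_pt_lim_opp, derivable_pt_lim_id.
Qed.

Theorem mainTheorem10
  (beta kappa gamma nu eta0inf : R) (w0 eta0 : R -> R)
  (Hbeta : 0 < beta) (Hkappa : 0 < kappa)
  (Hgamma : gamma = beta / (nu + 2))
  (Hnu : -1 < nu < 1)
  (Heta0inf : 0 < eta0inf)
  (Hrange : beta * (nu + 1) / (2 * (nu + 2)) < Rpower eta0inf (nu + 3) < beta)
  (Hsol : soliton_like nu gamma kappa eta0inf w0 eta0) :
  let etainf := fun s => Rpower s (-2 / (nu + 3)) * eta0inf in
  let ws := fun s z => Rpower s ((nu + 1) / (nu + 3)) * w0 z in
  let etas := fun s z => Rpower s (-2 / (nu + 3)) * eta0 z in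
  exists J : R,
    improper_integral_R (fun z => w0 z * (eta0 z - eta0inf)) J /\
    (forall s, 0 < s -> exists Is,
        improper_integral_R (fun z => ws s z * (etas s z - etainf s)) Is) /\
    (forall I : R -> R,
       (forall s, 0 < s ->
          improper_integral_R (fun z => ws s z * (etas s z - etainf s)) (I s)) ->
       forall s, 0 < s ->
         derivable_pt_lim I s
           (Rpower s (-4 / (nu + 3)) * ((nu - 1) / (nu + 3)) * J) /\
         0 < Rpower s (-4 / (nu + 3)) * ((nu - 1) / (nu + 3)) * J).
Proof.
  intros etainf ws etas.
  destruct Hsol as [_ [Hse [Hpos [_ [Heq [[w1 [w2 [Hd1 [Hd2 Hode]]]] [Hwlim [Helim Hgt]]]]]]]].
  destruct Hse as [D [HD0 HD]].
  assert (cw : forall x, continuity_pt w0 x).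
  { intro x. apply derivable_continuous_pt. exact (exist _ (w1 x) (Hd1 x)). }
  assert (ce : forall x, continuity_pt eta0 x).
  { intro x. rewrite <- HD0. apply derivable_continuous_pt. exact (exist _ (D 1%nat x) (HD 0%nat x)). }
  assert (Ew2 : w2 = fun z => (gamma * w0 z + (eta0 z - eta0inf)) / kappa).
  { apply functional_extensionality. intro z. specialize (Hode z). field_simplify; [|lra]. 
    apply (Rmult_eq_reg_l kappa); [|lra]. field_simplify; lra. }
  assert (cw2 : forall x, continuity_pt w2 x).
  { intro x. rewrite Ew2. apply continuity_pt_div; [| apply continuity_pt_const; intros ? ?; auto | lra].
    apply continuity_pt_plus. apply continuity_pt_scal, cw.
    apply continuity_pt_minus; [apply ce | apply continuity_pt_const; intros ? ?; auto]. }
  set (f := fun z => w0 z * (eta0 z - eta0inf)).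
  assert (cf : forall x, continuity_pt f x).
  { intro x. unfold f. apply continuity_pt_mult; [apply cw|].
    apply continuity_pt_minus; [apply ce | apply continuity_pt_const; intros ? ?; auto]. }
  assert (Hp : 0 < nu + 2) by lra.
  assert (Hwneg : forall z, w0 z < 0).
  { intro z. specialize (Heq z). specialize (Hgt z).
    rewrite !Rpower_Ropp in Heq.
    assert (Rpower eta0inf (nu+2) < Rpower (eta0 z) (nu+2)) by (apply Rlt_Rpower_l; lra).
    assert (/ Rpower (eta0 z) (nu+2) < / Rpower eta0inf (nu+2)).
    { apply Rinv_lt_contravar; auto. apply Rmult_lt_0_compat; apply rpow_pos. }
    lra. }
  assert (fneg : forall z, f z < 0).
  { intro z. unfold f. specialize (Hwneg z). specialize (Hgt z). nra. }
  set (c3 := Rpower eta0inf (nu + 3)).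
  assert (Hc3 : 0 < c3) by apply rpow_pos.
  assert (Hc3b : c3 < beta) by (unfold c3; lra).
  set (A := (nu + 2) * Rpower eta0inf (-(nu+2) - 1)).
  assert (EA : A = (nu + 2) / c3).
  { unfold A, c3. replace (-(nu+2) - 1) with (-(nu+3)) by ring. rewrite Rpower_Ropp. field. apply Rgt_not_eq, rpow_pos. }
  assert (Hg : 0 < gamma) by (rewrite Hgamma; apply Rdiv_lt_0_compat; lra).
  assert (HgA : 1 < gamma * A).
  { rewrite EA, Hgamma. replace (beta / (nu + 2) * ((nu + 2) / c3)) with (beta / c3) by (field; lra).
    apply (Rmult_lt_reg_r c3); auto. unfold Rdiv. rewrite Rmult_assoc, Rinv_l by lra. lra. }
  set (A' := (A + / gamma) / 2).
  assert (Hig : / gamma * gamma = 1) by (field; lra).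
  assert (HAg : / gamma < A).
  { apply (Rmult_lt_reg_l gamma); auto. rewrite Rinv_r by lra. lra. }
  assert (Hig0 : 0 < / gamma) by (apply Rinv_0_lt_compat; auto).
  assert (HA'1 : / gamma < A') by (unfold A'; lra).
  assert (HA'2 : A' < A) by (unfold A'; lra).
  assert (HA'0 : 0 < A') by lra.
  set (mu := (gamma - / A') / kappa).
  assert (Hmu : 0 < mu).
  { unfold mu. apply Rdiv_lt_0_compat; auto.
    assert (/ A' < / / gamma) by (apply Rinv_lt_contravar; nra).
    rewrite Rinv_inv in H. lra. }
  pose proof (derivable_pt_lim_power eta0inf (-(nu+2)) Heta0inf) as Hder.
  destruct (Hder (A - A') ltac:(lra)) as [del Hdel].
  destruct (Helim (Rmin del 1)) as [M HM].
  { apply Rmin_pos; [apply cond_pos | lra]. }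
  assert (Key : forall z, M < Rabs z -> w2 z < mu * w0 z /\ w0 z <= f z).
  { intros z Hz. specialize (HM z Hz).
    set (e := eta0 z - eta0inf) in *.
    assert (He0 : 0 < e) by (specialize (Hgt z); unfold e; lra).
    pose proof (Rmin_l del 1). pose proof (Rmin_r del 1).
    rewrite Rabs_right in HM by lra.
    specialize (Hdel e ltac:(lra)).
    rewrite Rabs_right in Hdel by lra. specialize (Hdel ltac:(lra)).
    replace (eta0inf + e) with (eta0 z) in Hdel by (unfold e; ring).
    assert (Ew : Rpower (eta0 z) (- (nu + 2)) - Rpower eta0inf (- (nu + 2)) = w0 z) by (specialize (Heq z); lra).
    rewrite Ew in Hdel. fold A in Hdel.
    replace (w0 z / e - - A) with (w0 z / e + A) in Hdel by ring.
    apply Rabs_def2 in Hdel. destruct Hdel as [Hq _].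
    set (q := w0 z / e) in *.
    assert (Eq : w0 z = q * e) by (unfold q; field; lra).
    assert (Hqa : q + A' < 0) by (unfold A in *; lra).
    assert (Hw : w0 z < - A' * e).
    { rewrite Eq. assert ((q + A') * e < 0) by (apply Rmult_neg_pos; auto). lra. }
    split.
    - rewrite Ew2. unfold mu.
      assert (Hinv : A' * / A' = 1) by (field; lra).
      assert (e < - w0 z * / A').
      { apply (Rmult_lt_reg_l A'); auto. replace (A' * (- w0 z * / A')) with (- w0 z) by (field; lra). lra. }
      replace ((gamma - / A') / kappa * w0 z) with (((gamma - / A') * w0 z) / kappa) by (field; lra).
      unfold Rdiv. apply Rmult_lt_compat_r. apply Rinv_0_lt_compat; auto.
      assert (Ht : - w0 z * / A' = - (w0 z * / A')) by ring.
      assert (Ht2 : (gamma - / A') * w0 z = gamma * w0 z - w0 z * / A') by ring. fold e. lra.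
    - unfold f. fold e. specialize (Hwneg z). nra. }
  set (T := Rmax M 0 + 1).
  assert (HT : M < T /\ 0 < T) by (unfold T; pose proof (Rmax_l M 0); pose proof (Rmax_r M 0); lra).
  assert (Hw2n : forall z, M < Rabs z -> w2 z < 0).
  { intros z Hz. destruct (Key z Hz) as [K1 _]. specialize (Hwneg z). nra. }
  destruct (Hwlim 1 ltac:(lra)) as [M1 HM1].
  assert (Hr : forall b, M < b -> 0 <= w1 b).
  { apply (deriv_nonneg_tail w0 w1 w2 M Hd1 Hd2).
    - intros z Hz. apply Hw2n. pose proof (Rle_abs z). lra.
    - exists (Rabs M1). intros z Hz. pose proof (Rle_abs M1). pose proof (Rle_abs z).
      specialize (HM1 z ltac:(lra)). rewrite Rminus_0_r in HM1. apply Rabs_def2 in HM1. lra. }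
  assert (Hl : forall b, M < b -> 0 <= - w1 (- b)).
  { apply (deriv_nonneg_tail (fun x => w0 (- x)) (fun x => - w1 (- x)) (fun x => w2 (- x)) M).
    - apply refl_deriv, Hd1.
    - intro z. replace (w2 (- z)) with (- - w2 (- z)) by ring.
      apply derivable_pt_lim_opp. apply (refl_deriv w1 w2 Hd2).
    - intros z Hz. apply Hw2n. rewrite Rabs_Ropp. pose proof (Rle_abs z). lra.
    - exists (Rabs M1). intros z Hz. pose proof (Rle_abs M1). pose proof (Rle_abs z).
      specialize (HM1 (- z)). rewrite Rabs_Ropp in HM1.
      specialize (HM1 ltac:(lra)). rewrite Rminus_0_r in HM1. apply Rabs_def2 in HM1. lra. }
  assert (Hint : forall a b, is_RInt (fun x => scal (/ mu) (w2 x)) a b (scal (/ mu) (w1 b - w1 a))).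
  { intros a b.
    assert (H0 := is_RInt_derive (V := R_CompleteNormedModule) w1 w2 a b
      (fun x _ => proj2 (is_derive_Reals _ _ _) (Hd2 x)) (fun x _ => cont_of _ _ (cw2 x))).
    exact (is_RInt_scal _ _ _ (/ mu) _ H0). }
  assert (Hcmp : forall x, M < Rabs x -> scal (/ mu) (w2 x) <= f x).
  { intros x Hx. destruct (Key x Hx) as [K1 K2]. unfold scal; simpl; unfold mult; simpl.
    assert (/ mu * w2 x < w0 x).
    { apply (Rmult_lt_reg_l mu); auto. rewrite <- Rmult_assoc, Rinv_r by lra. lra. }
    lra. }
  assert (Hrt : forall b, T <= b -> - w1 T / mu <= RInt f T b).
  { intros b Hb. eapply Rle_trans; [| apply (RInt_le (fun x => scal (/ mu) (w2 x)) f T b Hb)].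
    - rewrite (is_RInt_unique _ _ _ _ (Hint T b)). unfold scal; simpl; unfold mult; simpl.
      assert (0 <= w1 b) by (apply Hr; lra). unfold Rdiv.
      assert (0 < / mu) by (apply Rinv_0_lt_compat; auto). nra.
    - eexists; apply Hint.
    - apply exR, cf.
    - intros x Hx. apply Hcmp. rewrite Rabs_right by lra. lra. }
  assert (Hlt : forall a, a <= - T -> w1 (- T) / mu <= RInt f a (- T)).
  { intros a Ha. eapply Rle_trans; [| apply (RInt_le (fun x => scal (/ mu) (w2 x)) f a (- T) Ha)].
    - rewrite (is_RInt_unique _ _ _ _ (Hint a (- T))). unfold scal; simpl; unfold mult; simpl.
      assert (0 <= - w1 (- - a)) by (apply Hl; lra). rewrite Ropp_involutive in H. unfold Rdiv.
      assert (0 < / mu) by (apply Rinv_0_lt_compat; auto). nra.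
    - eexists; apply Hint.
    - apply exR, cf.
    - intros x Hx. apply Hcmp. rewrite Rabs_left by lra. lra. }
  set (Bd := w1 T / mu - w1 (- T) / mu - RInt f (- T) T).
  assert (Hbd : forall a b, a <= b -> - Bd <= RInt f a b).
  { intros a b Hab.
    pose proof (Rmin_l a (- T)). pose proof (Rmin_r a (- T)).
    pose proof (Rmax_l b T). pose proof (Rmax_r b T).
    eapply Rle_trans; [| apply (RInt_mono f (Rmin a (- T)) a b (Rmax b T)); auto; try lra].
    2: intro x; left; apply fneg.
    rewrite <- (RInt_Chasles f (Rmin a (- T)) (- T) (Rmax b T)) by apply exR, cf.
    rewrite <- (RInt_Chasles f (- T) T (Rmax b T)) by apply exR, cf.
    unfold plus; simpl.
    specialize (Hrt (Rmax b T) ltac:(lra)). specialize (Hlt (Rmin a (- T)) ltac:(lra)).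
    unfold Bd. unfold Rdiv in *. lra. }
  set (E := fun x => exists a b, a <= b /\ x = - RInt f a b).
  assert (HEb : bound E).
  { exists Bd. intros x [a [b [Hab Hx]]]. rewrite Hx. specialize (Hbd a b Hab). lra. }
  assert (HEn : exists x, E x) by (exists (- RInt f 0 0); exists 0, 0; split; [lra|auto]).
  destruct (completeness E HEb HEn) as [L [HLub HLl]].
  set (J := - L).
  assert (HJlim : forall eps, 0 < eps -> exists M, forall a b, a <= -M -> M <= b -> Rabs (RInt f a b - J) < eps).
  { intros eps Heps.
    assert (Hex : exists x, E x /\ L - eps < x).
    { apply not_all_not_ex. intro Hn. assert (L <= L - eps); [apply HLl|lra].
      intros x Hx. destruct (Rle_or_lt x (L - eps)) as [|Hlt']; auto. exfalso; apply (Hn x); auto. }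
    destruct Hex as [x [[a0 [b0 [Hab0 Hx0]]] Hx]]. rewrite Hx0 in Hx.
    exists (Rmax (Rabs a0) (Rabs b0)). intros a b Ha Hb.
    pose proof (Rmax_l (Rabs a0) (Rabs b0)). pose proof (Rmax_r (Rabs a0) (Rabs b0)).
    pose proof (Rle_abs (- a0)). rewrite Rabs_Ropp in H1. pose proof (Rle_abs b0).
    assert (a <= a0) by lra. assert (b0 <= b) by lra.
    assert (RInt f a b <= RInt f a0 b0) by (apply RInt_mono; auto; intro; left; apply fneg).
    assert (HE : E (- RInt f a b)) by (exists a, b; split; [lra|auto]).
    specialize (HLub _ HE). unfold J. apply Rabs_def1; lra. }
  assert (HJneg : J < 0).
  { assert (Hl1 : RInt f (-1) 1 < RInt (fun _ => 0) (-1) 1).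
    { apply RInt_lt; [lra | intros; apply continuous_const | intros; apply cont_of, cf | intros; apply fneg]. }
    rewrite RInt_const in Hl1. unfold scal in Hl1; simpl in Hl1; unfold mult in Hl1; simpl in Hl1.
    assert (HE : E (- RInt f (-1) 1)) by (exists (-1), 1; split; [lra|auto]).
    specialize (HLub _ HE). unfold J. lra. }
  assert (Hn3 : 0 < nu + 3) by lra.
  set (k := fun s => Rpower s ((nu - 1) / (nu + 3))).
  assert (Hfe : forall s, (fun z => ws s z * (etas s z - etainf s)) = (fun z => k s * f z)).
  { intro s. apply functional_extensionality. intro z. unfold ws, etas, etainf, k, f.
    replace ((nu - 1) / (nu + 3)) with ((nu + 1) / (nu + 3) + -2 / (nu + 3)) by (field; lra).
    rewrite Rpower_plus. ring. }
  assert (ckf : forall s x, continuity_pt (fun z => k s * f z) x).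
  { intros s x. apply continuity_pt_scal, cf. }
  exists J. split; [apply impr_of_RInt; auto|]. split.
  { intros s Hs. exists (k s * J). rewrite Hfe. apply impr_of_RInt; auto. apply lim_scal; auto. }
  intros I HI.
  assert (HIe : forall s, 0 < s -> I s = k s * J).
  { intros s Hs. specialize (HI s Hs). rewrite Hfe in HI.
    apply (lim_unique (fun z => k s * f z)). apply RInt_of_impr; auto. apply lim_scal; auto. }
  intros s Hs. split.
  - apply is_derive_Reals.
    apply (is_derive_ext_loc (fun t => k t * J)).
    { apply (locally_interval _ s 0 p_infty); simpl; auto. intros y Hy _. symmetry; apply HIe; auto. }
    apply is_derive_Reals. unfold k.
    replace (Rpower s (-4 / (nu + 3)) * ((nu - 1) / (nu + 3)) * J) with
      (((nu - 1) / (nu + 3)) * Rpower s ((nu - 1) / (nu + 3) - 1) * J).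
    2: { replace ((nu - 1) / (nu + 3) - 1) with (-4 / (nu + 3)) by (field; lra). ring. }
    apply derivable_pt_lim_scal_right. apply derivable_pt_lim_power; auto.
  - assert (Hq : (nu - 1) / (nu + 3) < 0).
    { unfold Rdiv. assert (0 < / (nu + 3)) by (apply Rinv_0_lt_compat; lra). nra. }
    pose proof (rpow_pos s (-4 / (nu + 3))).
    assert (0 < (nu - 1) / (nu + 3) * J).
    { replace ((nu - 1) / (nu + 3) * J) with ((- ((nu - 1) / (nu + 3))) * (- J)) by ring.
      apply Rmult_lt_0_compat; lra. }
    rewrite Rmult_assoc. apply Rmult_lt_0_compat; auto.
Qed.
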